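(* Let $G$ be an additive group and let $(X,\rho)$ be the $\mathbb R$-tree described below. Then $X$ is similarity homogeneous and not homogeneous. Moreover $X$ is a metric fibration with fibers $F_a=\{(f,a)\in X\}$, $a>0$.
   Context: A function on an interval $(\alpha,\beta)$ is piecewise constant from the left if for every $x$ there is $\varepsilon>0$ with $f$ constant on $[x-\varepsilon,x]$. $X$ is the set of pairs $(f,a_f)$, $a_f>0$ real, $f:(a_f,+\infty)\to G$ piecewise constant from the left with $f|_{(b_f,+\infty)}\equiv0$ for some $b_f\ge a_f$. Order: $(f,a_f)\preceq(g,a_g)$ iff $a_f\le a_g$ and $f|_{(a_g,+\infty)}=g$; any two elements $p,q$ have a supremum $p\vee q$. Metric: $\rho((f,a_f),(g,a_g))=|a_f-a_g|$ if the pairs are comparable, and $\rho(p,q)=\rho(p,p\vee q)+\rho(p\vee q,q)$ otherwise. A similarity with coefficient $k>0$ is a map with $\rho(F(x),F(y))=k\rho(x,y)$; $X$ is similarity homogeneous (resp. homogeneous) if its group of bijective similarities (resp. isometries) acts transitively. Two subsets $F_1,F_2$ are equidistant if for every $x_i\in F_i$ there is $x_j\in F_j$ ($j\ne i$) with $\rho(x_i,x_j)$ equal to the distance between $F_1$ and $F_2$. A metric fibration of $X$ is a partition of $X$ into closed subsets that are mutually isometric (with the induced metric) and pairwise equidistant. *)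

(* Defs.v *)
From Stdlib Require Import Reals ClassicalEpsilon.
From mathcomp Require Import all_boot all_algebra.

Set Implicit Arguments.
Unset Strict Implicit.

Local Open Scope R_scope.

Section Generic.
Variable T : Type.
Variable d : T -> T -> R.

Definition similarity (F : T -> T) (k : R) : Prop :=
  0 < k /\ forall x y, d (F x) (F y) = k * d x y.

Definition isometry (F : T -> T) : Prop := forall x y, d (F x) (F y) = d x y.

Definition bijective_map (F : T -> T) : Prop :=
  (forall x y, F x = F y -> x = y) /\ (forall y, exists x, F x = y).

Definition similarity_homogeneous : Prop :=
  forall x y : T, exists F k, bijective_map F /\ similarity F k /\ F x = y.

Definition homogeneous : Prop :=
  forall x y : T, exists F, bijective_map F /\ isometry F /\ F x = y.

Definition closed_set (A : T -> Prop) : Prop :=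
  forall x, (forall eps, 0 < eps -> exists y, A y /\ d x y < eps) -> A x.

Definition isometric_sets (A B : T -> Prop) : Prop :=
  exists phi : T -> T,
    (forall x, A x -> B (phi x)) /\
    (forall x y, A x -> A y -> phi x = phi y -> x = y) /\
    (forall y, B y -> exists x, A x /\ phi x = y) /\
    (forall x y, A x -> A y -> d (phi x) (phi y) = d x y).

Definition is_glb (E : R -> Prop) (m : R) : Prop :=
  (forall r, E r -> m <= r) /\ (forall m', (forall r, E r -> m' <= r) -> m' <= m).

Definition set_distance (A B : T -> Prop) (D : R) : Prop :=
  is_glb (fun r => exists x y, A x /\ B y /\ r = d x y) D.

Definition equidistant (A B : T -> Prop) : Prop :=
  exists D, set_distance A B D /\
    (forall x, A x -> exists y, B y /\ d x y = D) /\
    (forall y, B y -> exists x, A x /\ d y x = D).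

Definition metric_fibration (I : Type) (idx : I -> Prop) (Fam : I -> T -> Prop) : Prop :=
  (forall i, idx i -> exists x, Fam i x) /\
  (forall x, exists i, idx i /\ Fam i x) /\
  (forall i j x, idx i -> idx j -> i <> j -> Fam i x -> Fam j x -> False) /\
  (forall i, idx i -> closed_set (Fam i)) /\
  (forall i j, idx i -> idx j -> isometric_sets (Fam i) (Fam j)) /\
  (forall i j, idx i -> idx j -> i <> j -> equidistant (Fam i) (Fam j)).
End Generic.

Section Tree.
Variable G : zmodType.

Definition pc_left (a : R) (f : R -> G) : Prop :=
  forall x, a < x -> exists eps, 0 < eps /\ a < x - eps /\
    forall y, x - eps <= y <= x -> f y = f x.

(* An element (f, a_f) of X.  The function f : (a_f,+oo) -> G is represented
   by a total function R -> G normalised to 0 on (-oo, a_f], so that equal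
   pairs are equal elements. *)
Record Xpt := mkX {
  fn : R -> G;
  lev : R;
  lev_pos : 0 < lev;
  fn_pc : pc_left lev fn;
  fn_ev0 : exists b, lev <= b /\ forall x, b < x -> fn x = @GRing.zero G;
  fn_norm : forall x, x <= lev -> fn x = @GRing.zero G
}.

Definition Xle (p q : Xpt) : Prop :=
  lev p <= lev q /\ forall x, lev q < x -> fn p x = fn q x.

Definition is_sup (p q s : Xpt) : Prop :=
  Xle p s /\ Xle q s /\ forall u, Xle p u -> Xle q u -> Xle s u.

(* the supremum p \/ q (it exists, as stated in the paper) *)
Definition Xjoin (p q : Xpt) : Xpt :=
  epsilon (inhabits p) (is_sup p q).

Definition comparable (p q : Xpt) : Prop := Xle p q \/ Xle q p.

Definition rho (p q : Xpt) : R :=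
  if excluded_middle_informative (comparable p q) then Rabs (lev p - lev q)
  else Rabs (lev p - lev (Xjoin p q)) + Rabs (lev (Xjoin p q) - lev q).

Definition fiber (a : R) (p : Xpt) : Prop := lev p = a.
End Tree.

(* Main.v *)
Require Import Defs.
From Stdlib Require Import Reals Lra ClassicalEpsilon FunctionalExtensionality ProofIrrelevance.
From mathcomp Require Import all_boot all_algebra.
Import GRing.Theory.
Local Open Scope R_scope.

Definition gpc {G : zmodType} (g : R -> G) : Prop :=
  forall x, exists eps, 0 < eps /\ forall y, x - eps <= y <= x -> g y = g x.
Definition evz {G : zmodType} (g : R -> G) : Prop :=
  exists b, forall x, b < x -> g x = 0%R.

Definition cutf {G : zmodType} (l : R) (g : R -> G) (t : R) : G :=
  if Rlt_dec l t then g t else 0%R.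

Lemma cut_pc {G : zmodType} (l : R) (g : R -> G) : gpc g -> pc_left l (cutf l g).
Proof.
  intros Hg x Hx. destruct (Hg x) as [e [He H]].
  exists (Rmin e ((x - l)/2)). split; [|split].
  - apply Rmin_pos; lra.
  - assert (Rmin e ((x-l)/2) <= (x-l)/2) by apply Rmin_r. lra.
  - intros y [Hy1 Hy2]. assert (Rmin e ((x-l)/2) <= (x-l)/2) by apply Rmin_r.
    assert (Rmin e ((x-l)/2) <= e) by apply Rmin_l.
    unfold cutf. destruct (Rlt_dec l y); [|lra]. destruct (Rlt_dec l x); [|lra].
    apply H; lra.
Qed.

Lemma cut_ev {G : zmodType} (l : R) (g : R -> G) : evz g ->
  exists b, l <= b /\ forall x, b < x -> cutf l g x = 0%R.
Proof.
  intros [b Hb]. exists (Rmax l b). split; [apply Rmax_l|].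
  intros x Hx. unfold cutf. destruct (Rlt_dec l x); [|reflexivity].
  apply Hb. assert (b <= Rmax l b) by apply Rmax_r. lra.
Qed.

Lemma cut_norm {G : zmodType} (l : R) (g : R -> G) : forall x, x <= l -> cutf l g x = 0%R.
Proof. intros x Hx. unfold cutf. destruct (Rlt_dec l x); [lra|reflexivity]. Qed.

Definition build {G : zmodType} (g : R -> G) (l : R) (Hl : 0 < l) (Hg : gpc g) (He : evz g)
  : Xpt G := @mkX G (cutf l g) l Hl (cut_pc l g Hg) (cut_ev l g He) (cut_norm l g).

Lemma Xpt_ext {G : zmodType} (p q : Xpt G) : lev p = lev q -> (forall t, fn p t = fn q t) -> p = q.
Proof.
  destruct p as [f1 l1 a1 b1 c1 d1], q as [f2 l2 a2 b2 c2 d2]; simpl.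
  intros E1 E2. subst l2. assert (f1 = f2) by (apply functional_extensionality; auto). subst f2.
  f_equal; apply proof_irrelevance.
Qed.

Lemma gpc_fn {G : zmodType} (p : Xpt G) : gpc (fn p).
Proof.
  intros x. destruct (Rlt_dec (lev p) x) as [H|H].
  - destruct (@fn_pc _ p x H) as [e [He [_ H2]]]. exists e; split; auto.
  - exists 1. split; [lra|]. intros y Hy. rewrite !fn_norm; auto; lra.
Qed.

Lemma evz_fn {G : zmodType} (p : Xpt G) : evz (fn p).
Proof. destruct (fn_ev0 p) as [b [_ H]]. exists b; auto. Qed.

Lemma gpc_aff {G : zmodType} (g : R -> G) (k m : R) : 0 < k -> gpc g -> gpc (fun t => g (k * t + m)).
Proof.
  intros Hk Hg x. destruct (Hg (k * x + m)) as [e [He H]].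
  exists (e / k). split. { apply Rdiv_lt_0_compat; lra. }
  intros y [Hy1 Hy2]. apply H.
  assert (k * (e / k) = e) by (field; lra).
  assert (k * (x - e/k) <= k * y) by (apply Rmult_le_compat_l; lra).
  assert (k * y <= k * x) by (apply Rmult_le_compat_l; lra).
  split; nra.
Qed.

Lemma evz_aff {G : zmodType} (g : R -> G) (k m : R) : 0 < k -> evz g -> evz (fun t => g (k * t + m)).
Proof.
  intros Hk [b Hb]. exists ((b - m) / k). intros x Hx. apply Hb.
  assert (k * ((b - m) / k) = b - m) by (field; lra).
  assert (k * ((b - m) / k) < k * x) by (apply Rmult_lt_compat_l; lra). lra.
Qed.

Lemma gpc_add {G : zmodType} (g h : R -> G) : gpc g -> gpc h -> gpc (fun t => (g t + h t)%R).
Proof.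
  intros Hg Hh x. destruct (Hg x) as [e1 [He1 H1]]. destruct (Hh x) as [e2 [He2 H2]].
  exists (Rmin e1 e2). split; [apply Rmin_pos; lra|].
  intros y Hy. assert (Rmin e1 e2 <= e1) by apply Rmin_l. assert (Rmin e1 e2 <= e2) by apply Rmin_r.
  rewrite H1; [|lra]. rewrite H2; [|lra]. reflexivity.
Qed.

Lemma evz_add {G : zmodType} (g h : R -> G) : evz g -> evz h -> evz (fun t => (g t + h t)%R).
Proof.
  intros [b1 H1] [b2 H2]. exists (Rmax b1 b2). intros x Hx.
  assert (b1 <= Rmax b1 b2) by apply Rmax_l. assert (b2 <= Rmax b1 b2) by apply Rmax_r.
  rewrite H1; [|lra]. rewrite H2; [|lra]. apply: addr0.
Qed.

Lemma gpc_opp {G : zmodType} (g : R -> G) : gpc g -> gpc (fun t => (- g t)%R).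
Proof. intros Hg x. destruct (Hg x) as [e [He H]]. exists e. split; auto. intros y Hy. rewrite H; auto. Qed.

Lemma evz_opp {G : zmodType} (g : R -> G) : evz g -> evz (fun t => (- g t)%R).
Proof. intros [b H]. exists b. intros x Hx. rewrite H; auto. apply: oppr0. Qed.

Definition agree {G : zmodType} (p q : Xpt G) (t : R) : Prop :=
  forall x, t < x -> fn p x = fn q x.

Definition joinlev {G : zmodType} (p q : Xpt G) (c : R) : Prop :=
  lev p <= c /\ lev q <= c /\ agree p q c /\
  forall t, lev p <= t -> lev q <= t -> agree p q t -> c <= t.

Lemma joinlev_uniq {G : zmodType} (p q : Xpt G) c c' : joinlev p q c -> joinlev p q c' -> c = c'.
Proof.
  intros [A1 [A2 [A3 A4]]] [B1 [B2 [B3 B4]]].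
  assert (c <= c') by auto. assert (c' <= c) by auto. lra.
Qed.

Lemma joinlev_sym {G : zmodType} (p q : Xpt G) c : joinlev p q c -> joinlev q p c.
Proof.
  intros [A1 [A2 [A3 A4]]]. split; [|split; [|split]]; auto.
  - intros x Hx. symmetry; auto.
  - intros t H1 H2 H3. apply A4; auto. intros x Hx; symmetry; auto.
Qed.

Lemma joinlev_ex {G : zmodType} (p q : Xpt G) : exists c, joinlev p q c.
Proof.
  destruct (fn_ev0 p) as [bp [Hbp1 Hbp2]]. destruct (fn_ev0 q) as [bq [Hbq1 Hbq2]].
  set (E := fun u => lev p <= - u /\ lev q <= - u /\ agree p q (- u)).
  assert (HB : bound E).
  { exists (- lev p). intros u [H1 _]. lra. }
  assert (HN : exists u, E u).
  { exists (- Rmax bp bq). unfold E. rewrite Ropp_involutive.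
    assert (bp <= Rmax bp bq) by apply Rmax_l. assert (bq <= Rmax bp bq) by apply Rmax_r.
    split; [lra|split; [lra|]]. intros x Hx. rewrite Hbp2; [|lra]. rewrite Hbq2; [|lra]. reflexivity. }
  destruct (completeness E HB HN) as [m [Hm1 Hm2]].
  exists (- m). split; [|split; [|split]].
  - assert (m <= - lev p). { apply Hm2. intros u [H1 _]. lra. } lra.
  - assert (m <= - lev q). { apply Hm2. intros u [_ [H1 _]]. lra. } lra.
  - intros x Hx. apply NNPP. intro Hne.
    assert (m <= - x).
    { apply Hm2. intros u [H1 [H2 H3]]. destruct (Rle_dec u (-x)) as [|Hl]; auto.
      exfalso. apply Hne. apply H3. lra. }
    lra.
  - intros t H1 H2 H3. assert (E (- t)) by (unfold E; rewrite Ropp_involutive; auto).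
    assert (- t <= m) by (apply Hm1; auto). lra.
Qed.

Lemma joinlev_le {G : zmodType} (p q : Xpt G) : Xle p q -> joinlev p q (lev q).
Proof.
  intros [H1 H2]. split; [|split; [|split]]; auto; try lra.
Qed.

Lemma joinlev_same {G : zmodType} (p q : Xpt G) :
  (forall x, Rmax (lev p) (lev q) < x -> fn p x = fn q x) -> joinlev p q (Rmax (lev p) (lev q)).
Proof.
  intros H. split; [apply Rmax_l|split; [apply Rmax_r|split]]; auto.
  intros t H1 H2 _. apply Rmax_lub; auto.
Qed.

Lemma build_lev {G : zmodType} g l Hl Hg He : lev (@build G g l Hl Hg He) = l.
Proof. reflexivity. Qed.

Lemma build_fn {G : zmodType} g l Hl Hg He t : fn (@build G g l Hl Hg He) t = cutf l g t.
Proof. reflexivity. Qed.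

Lemma sup_ex {G : zmodType} (p q : Xpt G) : exists s, is_sup p q s.
Proof.
  destruct (joinlev_ex p q) as [c [H1 [H2 [H3 H4]]]].
  assert (Hc : 0 < c) by (pose proof (lev_pos p); lra).
  exists (build (fn p) c Hc (gpc_fn p) (evz_fn p)).
  split; [|split].
  - split; [exact H1|]. intros x Hx. simpl in *. unfold cutf. destruct (Rlt_dec c x); [reflexivity|lra].
  - split; [exact H2|]. intros x Hx. simpl in *. unfold cutf. destruct (Rlt_dec c x); [|lra].
    symmetry; apply H3; auto.
  - intros u [U1 U2] [V1 V2]. simpl.
    assert (c <= lev u). { apply H4; auto. intros x Hx. rewrite U2; auto. rewrite V2; auto. }
    split; auto. intros x Hx. rewrite build_fn. unfold cutf. destruct (Rlt_dec c x); [|lra]. apply U2; auto.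
Qed.

Lemma sup_joinlev {G : zmodType} (p q s : Xpt G) : is_sup p q s -> joinlev p q (lev s).
Proof.
  intros [[A1 A2] [[B1 B2] C]]. split; [auto|split; [auto|split]].
  - intros x Hx. rewrite A2; auto. rewrite B2; auto.
  - intros t T1 T2 T3.
    assert (Ht : 0 < t) by (pose proof (lev_pos p); lra).
    set (u := build (fn p) t Ht (gpc_fn p) (evz_fn p)).
    assert (Xle s u) as [D _]; [|exact D].
    apply C.
    + split; [exact T1|]. intros x Hx. simpl in *. unfold cutf. destruct (Rlt_dec t x); [reflexivity|lra].
    + split; [exact T2|]. intros x Hx. simpl in *. unfold cutf. destruct (Rlt_dec t x); [|lra].
      symmetry; apply T3; auto.
Qed.

Lemma rho_eq {G : zmodType} (p q : Xpt G) c : joinlev p q c -> rho p q = 2 * c - lev p - lev q.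
Proof.
  intros Hc. unfold rho.
  match goal with |- context [excluded_middle_informative ?P] => destruct (excluded_middle_informative P) as [[H|H]|H] end; cbn -[Rabs Xjoin].
  - pose proof (joinlev_uniq _ _ _ _ Hc (joinlev_le _ _ H)). pose proof (proj1 H) as Hl0.
    subst c. unfold Rabs. destruct (Rcase_abs _); lra.
  - pose proof (joinlev_uniq _ _ _ _ (joinlev_sym _ _ _ Hc) (joinlev_le _ _ H)). pose proof (proj1 H) as Hl0.
    subst c. unfold Rabs. destruct (Rcase_abs _); lra.
  - assert (HJ : is_sup p q (Xjoin p q)).
    { unfold Xjoin. apply epsilon_spec. apply sup_ex. }
    pose proof (joinlev_uniq _ _ _ _ Hc (sup_joinlev _ _ _ HJ)). subst c.
    destruct Hc as [H1 [H2 _]].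
    unfold Rabs. destruct (Rcase_abs _); destruct (Rcase_abs _); lra.
Qed.

Lemma rho_ge {G : zmodType} (p q : Xpt G) : Rabs (lev p - lev q) <= rho p q.
Proof.
  destruct (joinlev_ex p q) as [c Hc]. rewrite (rho_eq _ _ _ Hc).
  destruct Hc as [H1 [H2 _]]. unfold Rabs. destruct (Rcase_abs _); lra.
Qed.

Lemma rho_same {G : zmodType} (p q : Xpt G) :
  (forall x, Rmax (lev p) (lev q) < x -> fn p x = fn q x) -> rho p q = Rabs (lev p - lev q).
Proof.
  intros H. rewrite (rho_eq _ _ _ (joinlev_same _ _ H)).
  unfold Rmax, Rabs. destruct (Rle_dec _ _); destruct (Rcase_abs _); lra.
Qed.

Lemma kL1 k a t : 0 < k -> k * a < t -> a < / k * t + 0.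
Proof.
  intros Hk H. assert (/ k * (k * a) = a) by (field; lra).
  assert (/ k * (k * a) < / k * t) by (apply Rmult_lt_compat_l; [apply Rinv_0_lt_compat|]; lra). lra.
Qed.
Lemma kL1' k a t : 0 < k -> k * a <= t -> a <= / k * t + 0.
Proof.
  intros Hk H. assert (/ k * (k * a) = a) by (field; lra).
  assert (/ k * (k * a) <= / k * t) by (apply Rmult_le_compat_l; [left; apply Rinv_0_lt_compat|]; lra). lra.
Qed.
Lemma kL2 k a t : 0 < k -> a < / k * t + 0 -> k * a < t.
Proof.
  intros Hk H. assert (k * (/ k * t) = t) by (field; lra).
  assert (k * a < k * (/ k * t)) by (apply Rmult_lt_compat_l; lra). lra.
Qed.
Lemma kL2' k a t : 0 < k -> a <= / k * t + 0 -> k * a <= t.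
Proof.
  intros Hk H. assert (k * (/ k * t) = t) by (field; lra).
  assert (k * a <= k * (/ k * t)) by (apply Rmult_le_compat_l; lra). lra.
Qed.
Lemma kL3 k x : 0 < k -> / k * (k * x) + 0 = x.
Proof. intros Hk. field. lra. Qed.
Lemma kL4 k x : 0 < k -> k * (/ k * x + 0) = x.
Proof. intros Hk. field. lra. Qed.

Definition Mmap {G : zmodType} (k : R) (Hk : 0 < k) (phi : R -> G) (Hp : gpc phi) (He : evz phi)
  (p : Xpt G) : Xpt G :=
  build (fun t => (fn p (/ k * t + 0) + phi t)%R) (k * lev p)
    (Rmult_lt_0_compat _ _ Hk (lev_pos p))
    (gpc_add _ _ (gpc_aff (fn p) (/ k) 0 (Rinv_0_lt_compat _ Hk) (gpc_fn p)) Hp)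
    (evz_add _ _ (evz_aff (fn p) (/ k) 0 (Rinv_0_lt_compat _ Hk) (evz_fn p)) He).

Lemma Mfn_big {G : zmodType} k Hk (phi : R -> G) Hp He p t : k * lev p < t ->
  fn (Mmap k Hk phi Hp He p) t = (fn p (/ k * t + 0) + phi t)%R.
Proof. intros H. unfold Mmap. rewrite build_fn. unfold cutf. destruct (Rlt_dec _ _); [reflexivity|lra]. Qed.

Lemma Mlev {G : zmodType} k Hk (phi : R -> G) Hp He p : lev (Mmap k Hk phi Hp He p) = k * lev p.
Proof. reflexivity. Qed.

Lemma M_joinlev {G : zmodType} k Hk (phi : R -> G) Hp He p q c :
  joinlev p q c -> joinlev (Mmap k Hk phi Hp He p) (Mmap k Hk phi Hp He q) (k * c).
Proof.
  intros [H1 [H2 [H3 H4]]]. unfold joinlev. rewrite !Mlev.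
  assert (k * lev p <= k * c) by (apply Rmult_le_compat_l; lra).
  assert (k * lev q <= k * c) by (apply Rmult_le_compat_l; lra).
  split; [auto|split; [auto|split]].
  - intros x Hx. rewrite !Mfn_big; try lra. rewrite H3; [reflexivity|]. apply kL1; auto.
  - intros t T1 T2 T3. apply kL2'; auto. apply H4.
    + apply kL1'; auto.
    + apply kL1'; auto.
    + intros x Hx. assert (Hkx : t < k * x).
      { rewrite <- (kL4 k t Hk). apply Rmult_lt_compat_l; lra. }
      pose proof (T3 _ Hkx) as E. rewrite !Mfn_big in E; try lra.
      rewrite (kL3 k x Hk) in E. exact (addIr _ E).
Qed.

Lemma M_rho {G : zmodType} k Hk (phi : R -> G) Hp He p q :
  rho (Mmap k Hk phi Hp He p) (Mmap k Hk phi Hp He q) = k * rho p q.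
Proof.
  destruct (joinlev_ex p q) as [c Hc].
  rewrite (rho_eq _ _ _ (M_joinlev k Hk phi Hp He _ _ _ Hc)) (rho_eq _ _ _ Hc) !Mlev. ring.
Qed.

Lemma M_inj {G : zmodType} k Hk (phi : R -> G) Hp He p q :
  Mmap k Hk phi Hp He p = Mmap k Hk phi Hp He q -> p = q.
Proof.
  intros E. assert (El : k * lev p = k * lev q) by (rewrite <- !(Mlev k Hk phi Hp He); rewrite E; reflexivity).
  assert (El' : lev p = lev q).
  { apply (Rmult_eq_reg_l k); lra. }
  apply Xpt_ext; auto. intros t. destruct (Rlt_dec (lev p) t) as [Ht|Ht].
  - assert (k * lev p < k * t) by (apply Rmult_lt_compat_l; lra).
    pose proof (f_equal (fun z => fn z (k * t)) E) as E2. cbv beta in E2.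
    rewrite !Mfn_big in E2; try lra. rewrite (kL3 k t Hk) in E2. exact (addIr _ E2).
  - rewrite !fn_norm; auto; lra.
Qed.

Lemma M_surj {G : zmodType} k Hk (phi : R -> G) Hp He y :
  exists x, Mmap k Hk phi Hp He x = y.
Proof.
  assert (Hl : 0 < / k * lev y + 0).
  { pose proof (lev_pos y). pose proof (Rinv_0_lt_compat _ Hk).
    assert (0 < / k * lev y) by (apply Rmult_lt_0_compat; lra). lra. }
  exists (build (fun t => GRing.add (fn y (k * t + 0)) ((fun s => GRing.opp (phi s)) (k * t + 0))) (/ k * lev y + 0) Hl
     (gpc_add _ _ (gpc_aff _ k 0 Hk (gpc_fn y)) (gpc_aff _ k 0 Hk (gpc_opp _ Hp)))
     (evz_add _ _ (evz_aff _ k 0 Hk (evz_fn y)) (evz_aff _ k 0 Hk (evz_opp _ He)))).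
  apply Xpt_ext.
  - rewrite Mlev. apply kL4; auto.
  - intros t. destruct (Rlt_dec (lev y) t) as [Ht|Ht].
    + rewrite Mfn_big; [| change (k * (/ k * lev y + 0) < t); rewrite kL4; auto].
      rewrite build_fn. unfold cutf. destruct (Rlt_dec _ _) as [H|H].
      * cbn [is_left]. rewrite kL4; auto. rewrite Rplus_0_r. rewrite -addrA addNr addr0. reflexivity.
      * exfalso. apply H. apply kL1; auto. rewrite kL4; auto.
    + unfold Mmap. rewrite build_fn. unfold cutf. destruct (Rlt_dec _ _) as [H|H].
      * exfalso. change (k * (/ k * lev y + 0) < t) in H. rewrite kL4 in H; auto.
      * cbn [is_left]. symmetry. apply fn_norm. lra.
Qed.

Lemma gpc_zero {G : zmodType} : gpc (fun _ : R => (0 : G)%R).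
Proof. intros x. exists 1. split; [lra|]. intros; reflexivity. Qed.
Lemma evz_zero {G : zmodType} : evz (fun _ : R => (0 : G)%R).
Proof. exists 0. intros; reflexivity. Qed.

Definition zpt (G : zmodType) (l : R) (Hl : 0 < l) : Xpt G := build _ l Hl (@gpc_zero G) (@evz_zero G).

Lemma zpt_fn G l Hl t : fn (zpt G l Hl) t = 0%R.
Proof. rewrite /zpt build_fn /cutf. destruct (Rlt_dec _ _); reflexivity. Qed.

Lemma rho_zpt G l1 H1 l2 H2 : rho (zpt G l1 H1) (zpt G l2 H2) = Rabs (l1 - l2).
Proof. rewrite rho_same; [reflexivity|]. intros; rewrite !zpt_fn; reflexivity. Qed.

Lemma sim_hom (G : zmodType) : similarity_homogeneous (@rho G).
Proof.
  intros x y.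
  pose proof (lev_pos x) as Hx. pose proof (lev_pos y) as Hy.
  set (k := lev y / lev x).
  assert (Hk : 0 < k) by (apply Rdiv_lt_0_compat; lra).
  assert (Hkx : k * lev x = lev y) by (unfold k; field; lra).
  pose (Hp := gpc_add _ _ (gpc_fn y) (gpc_opp _ (gpc_aff (fn x) (/ k) 0 (Rinv_0_lt_compat _ Hk) (gpc_fn x)))).
  pose (He := evz_add _ _ (evz_fn y) (evz_opp _ (evz_aff (fn x) (/ k) 0 (Rinv_0_lt_compat _ Hk) (evz_fn x)))).
  exists (Mmap k Hk _ Hp He), k. split; [|split].
  - split.
    + intros p q E. exact (M_inj _ _ _ _ _ _ _ E).
    + intros z. apply M_surj.
  - split; [exact Hk|]. intros p q. apply M_rho.
  - apply Xpt_ext.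
    + rewrite Mlev. exact Hkx.
    + intros t. destruct (Rlt_dec (lev y) t) as [Ht|Ht].
      * rewrite Mfn_big; [|lra]. cbv beta. rewrite addrC. apply: subrK.
      * unfold Mmap. rewrite build_fn /cutf. destruct (Rlt_dec _ _) as [H|H]; [lra|].
        cbn [is_left]. symmetry. apply fn_norm. lra.
Qed.

Lemma not_hom (G : zmodType) : ~ homogeneous (@rho G).
Proof.
  intros Hh.
  assert (H1 : 0 < 1) by lra. assert (H2 : 0 < 2) by lra.
  assert (H3 : 0 < 1/2) by lra. assert (H4 : 0 < 7/2) by lra.
  destruct (Hh (zpt G 1 H1) (zpt G 2 H2)) as [F [[Finj Fsurj] [Fiso Fx]]].
  destruct (Fsurj (zpt G (1/2) H3)) as [q Hq].
  destruct (Fsurj (zpt G (7/2) H4)) as [r Hr].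
  set (x0 := zpt G 1 H1) in *.
  assert (E1 : rho x0 q = 3/2).
  { rewrite -Fiso Fx Hq rho_zpt. unfold Rabs; destruct (Rcase_abs _); lra. }
  assert (E2 : rho x0 r = 3/2).
  { rewrite -Fiso Fx Hr rho_zpt. unfold Rabs; destruct (Rcase_abs _); lra. }
  assert (E3 : rho q r = 3).
  { rewrite -Fiso Hq Hr rho_zpt. unfold Rabs; destruct (Rcase_abs _); lra. }
  destruct (joinlev_ex x0 q) as [c1 J1]. destruct (joinlev_ex x0 r) as [c2 J2].
  destruct (joinlev_ex q r) as [c3 J3].
  rewrite (rho_eq _ _ _ J1) in E1. rewrite (rho_eq _ _ _ J2) in E2. rewrite (rho_eq _ _ _ J3) in E3.
  assert (c3 <= Rmax c1 c2).
  { destruct J1 as [A1 [A2 [A3 _]]]. destruct J2 as [B1 [B2 [B3 _]]]. destruct J3 as [_ [_ [_ C4]]].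
    assert (c1 <= Rmax c1 c2) by apply Rmax_l. assert (c2 <= Rmax c1 c2) by apply Rmax_r.
    apply C4; try lra. intros z Hz. rewrite -A3; [|lra]. apply B3. lra. }
  destruct J1 as [A1 _]. destruct J2 as [B1 _].
  pose proof (lev_pos q). pose proof (lev_pos r).
  assert (Hl0 : lev x0 = 1) by reflexivity. rewrite Hl0 in A1 B1 E1 E2.
  unfold Rmax in *. destruct (Rle_dec c1 c2); lra.
Qed.

Definition Sh {G : zmodType} (j : R) (Hj : 0 < j) (p : Xpt G) : Xpt G :=
  build (fun t => fn p (1 * t + (lev p - j))) j Hj
    (gpc_aff (fn p) 1 (lev p - j) Rlt_0_1 (gpc_fn p)) (evz_aff (fn p) 1 (lev p - j) Rlt_0_1 (evz_fn p)).

Lemma Sh_lev {G : zmodType} j Hj (p : Xpt G) : lev (Sh j Hj p) = j.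
Proof. reflexivity. Qed.

Lemma Sh_big {G : zmodType} j Hj (p : Xpt G) t : j < t -> fn (Sh j Hj p) t = fn p (1 * t + (lev p - j)).
Proof. intros H. rewrite /Sh build_fn /cutf. destruct (Rlt_dec _ _); [reflexivity|lra]. Qed.

Lemma Sh_small {G : zmodType} j Hj (p : Xpt G) t : t <= j -> fn (Sh j Hj p) t = 0%R.
Proof. intros H. rewrite /Sh build_fn /cutf. destruct (Rlt_dec _ _); [lra|reflexivity]. Qed.

Lemma Sh_joinlev {G : zmodType} i j Hj (p q : Xpt G) c : lev p = i -> lev q = i ->
  joinlev p q c -> joinlev (Sh j Hj p) (Sh j Hj q) (c - i + j).
Proof.
  intros Lp Lq [H1 [H2 [H3 H4]]]. unfold joinlev. rewrite !Sh_lev.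
  split; [lra|split; [lra|split]].
  - intros x Hx. rewrite !Sh_big; try lra. rewrite Lp Lq. apply H3. lra.
  - intros t T1 _ T3. assert (c <= t - j + i); [|lra].
    apply H4; try lra. intros x Hx.
    pose proof (T3 (x - i + j) ltac:(lra)) as E. rewrite !Sh_big in E; try lra.
    replace (1 * (x - i + j) + (lev p - j)) with x in E by lra.
    replace (1 * (x - i + j) + (lev q - j)) with x in E by lra. exact E.
Qed.

Lemma fibration (G : zmodType) : metric_fibration (@rho G) (fun a : R => Rlt 0 a) (@fiber G).
Proof.
  split; [|split; [|split; [|split; [|split]]]].
  - intros i Hi. exists (zpt G i Hi). reflexivity.
  - intros x. exists (lev x). split; [apply lev_pos|reflexivity].
  - intros i j x _ _ Hne Hi Hj. unfold fiber in *. congruence.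
  - intros i Hi x Hx. unfold fiber. apply NNPP. intro Hne.
    assert (Hpos : 0 < Rabs (lev x - i)) by (apply Rabs_pos_lt; lra).
    destruct (Hx _ Hpos) as [y [Hy Hd]]. unfold fiber in Hy.
    pose proof (rho_ge x y). rewrite Hy in H. lra.
  - intros i j Hi Hj. exists (Sh j Hj). split; [|split; [|split]].
    + intros x _. reflexivity.
    + intros p q Lp Lq E. unfold fiber in Lp, Lq. apply Xpt_ext; [congruence|].
      intros t. destruct (Rlt_dec i t) as [Ht|Ht].
      * pose proof (f_equal (fun z => fn z (t - i + j)) E) as E2. cbv beta in E2.
        rewrite !Sh_big in E2; try lra.
        replace (1 * (t - i + j) + (lev p - j)) with t in E2 by lra.
        replace (1 * (t - i + j) + (lev q - j)) with t in E2 by lra. exact E2.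
      * rewrite !fn_norm; auto; lra.
    + intros y Ly. unfold fiber in Ly. exists (Sh i Hi y). split; [reflexivity|].
      apply Xpt_ext; [rewrite Sh_lev; auto|].
      intros t. destruct (Rlt_dec j t) as [Ht|Ht].
      * rewrite Sh_big; [|lra]. rewrite Sh_lev Sh_big; [|lra].
        f_equal. lra.
      * rewrite Sh_small; [|lra]. symmetry. apply fn_norm. lra.
    + intros p q Lp Lq. unfold fiber in Lp, Lq.
      destruct (joinlev_ex p q) as [c Hc].
      rewrite (rho_eq _ _ _ (Sh_joinlev i j Hj p q c Lp Lq Hc)) (rho_eq _ _ _ Hc) !Sh_lev. lra.
  - intros i j Hi Hj Hne. exists (Rabs (i - j)). split; [|split].
    + split.
      * intros r [x [y [Lx [Ly E]]]]. subst r. unfold fiber in Lx, Ly.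
        pose proof (rho_ge x y). rewrite Lx Ly in H. exact H.
      * intros m Hm. rewrite -(rho_zpt G i Hi j Hj). apply Hm.
        exists (zpt G i Hi), (zpt G j Hj). split; [reflexivity|split; reflexivity].
    + intros x Lx. unfold fiber in Lx. exists (build (fn x) j Hj (gpc_fn x) (evz_fn x)).
      split; [reflexivity|]. rewrite rho_same.
      * rewrite build_lev Lx. reflexivity.
      * intros t Ht. rewrite build_fn /cutf. destruct (Rlt_dec _ _) as [|H]; [reflexivity|].
        exfalso. apply H. rewrite build_lev in Ht. pose proof (Rmax_r (lev x) j). lra.
    + intros y Ly. unfold fiber in Ly. exists (build (fn y) i Hi (gpc_fn y) (evz_fn y)).
      split; [reflexivity|]. rewrite rho_same.
      * rewrite build_lev Ly. apply Rabs_minus_sym.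
      * intros t Ht. rewrite build_fn /cutf. destruct (Rlt_dec _ _) as [|H]; [reflexivity|].
        exfalso. apply H. rewrite build_lev in Ht. pose proof (Rmax_r (lev y) i). lra.
Qed.

Theorem theorem4 (G : zmodType) :
  similarity_homogeneous (@rho G) /\
  ~ homogeneous (@rho G) /\
  metric_fibration (@rho G) (fun a : R => Rlt 0 a) (@fiber G).
Proof.
  split; [apply sim_hom|split; [apply not_hom|apply fibration]].
Qed.
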